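(* Let $a_{max}\ge 1$, $U_0\ge 0$, $T>0$ and $t_0\ge 0$. Then there exist reals $t_0<t_1<t_2<\cdots$ and, for each $k\ge 0$, a real $s_k$ with $t_k\le s_k$ and $s_k+T\le t_{k+1}$, such that for every affine map $\varphi(s)=as+b$ with $0<a\le a_{max}$, $1/a\le a_{max}$ and $|b|\le a_{max}U_0$, and every $k\ge0$, one has $\varphi([s_k,s_k+T))\subseteq[t_k,t_{k+1})$.
   Context: Interpretation: the protocol stages are assigned adjacent intervals $[t_k,t_{k+1})$ of local clock time. A node $i$ transmits a message of size $W$ (via a MAC code guaranteeing delivery within a delay $T=T_{MAC}(W)$) during the local-time window $[s_k,s_k+T)$ of its own clock. For two good nodes $i,j$, node $j$'s clock reading as a function of node $i$'s reading $s$ is $\tau^j_i(s)=a_{ji}s+b_{ji}$, where all relative skews satisfy $0<a_{ij}\le a_{max}$ (for both orders, so $a_{ji}=1/a_{ij}\ge 1/a_{max}$) and $|b_{ji}|\le a_{max}U_0$; $\varphi$ plays the role of $\tau^j_i$. The conclusion says the message is received during the same interval as measured by node $j$'s clock. *)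

(* Defs.v *)
From Stdlib Require Import Reals.
Open Scope R_scope.

Definition image_in (a b lo T l u : R) : Prop :=
  forall x, lo <= x < lo + T -> l <= a * x + b < u.

(* Main.v *)
Require Import Defs.
From Stdlib Require Import Reals Lra Psatz.
Open Scope R_scope.

Fixpoint tt (A B T t0 : R) (k : nat) : R :=
  match k with
  | O => t0
  | S k => A * (A * (tt A B T t0 k + B) + T) + B + 1
  end.

Theorem lemma6 (amax U0 T t0 : R) :
  1 <= amax -> 0 <= U0 -> 0 < T -> 0 <= t0 ->
  exists (t s : nat -> R),
    t 0%nat = t0 /\
    (forall k : nat, t k < t (S k)) /\
    (forall k : nat, t k <= s k /\ s k + T <= t (S k)) /\
    (forall (a b : R), 0 < a -> a <= amax -> / a <= amax -> Rabs b <= amax * U0 ->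
       forall k : nat, image_in a b (s k) T (t k) (t (S k))).
Proof.
  intros HA HU HT Ht0.
  set (B := amax * U0).
  assert (HB : 0 <= B) by (unfold B; nra).
  assert (Hpos : forall k, 0 <= tt amax B T t0 k).
  { induction k; simpl; nra. }
  exists (tt amax B T t0), (fun k => amax * (tt amax B T t0 k + B)).
  split; [reflexivity|].
  split.
  { intro k; simpl; specialize (Hpos k).
    assert (amax * (tt amax B T t0 k + B) >= tt amax B T t0 k + B) by nra.
    assert (amax * (amax * (tt amax B T t0 k + B) + T) >= amax * (tt amax B T t0 k + B) + T) by nra.
    lra. }
  split.
  { intro k; simpl; specialize (Hpos k).
    assert (amax * (tt amax B T t0 k + B) >= tt amax B T t0 k + B) by nra.
    assert (amax * (amax * (tt amax B T t0 k + B) + T) >= amax * (tt amax B T t0 k + B) + T) by nra.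
    split; lra. }
  intros a b Ha HaA HiA Hb k x Hx. simpl.
  specialize (Hpos k). set (t := tt amax B T t0 k) in *.
  assert (HaA1 : 1 <= a * amax).
  { apply Rmult_le_compat_l with (r := a) in HiA; [|lra].
    rewrite <- Rinv_r_sym in HiA by lra. lra. }
  assert (Hb1 : -B <= b) by (unfold Rabs in Hb; destruct (Rcase_abs b); lra).
  assert (Hb2 : b <= B) by (unfold Rabs in Hb; destruct (Rcase_abs b); lra).
  assert (Hs0 : 0 <= amax * (t + B)) by nra.
  assert (Hx0 : 0 <= x) by lra.
  split.
  - assert (a * x >= a * (amax * (t + B))) by nra.
    assert (a * (amax * (t + B)) >= t + B) by nra.
    lra.
  - assert (a * x <= amax * x) by nra.
    assert (amax * x < amax * (amax * (t + B) + T)) by nra.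
    lra.
Qed.
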